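(* Let $n\ge 2$. The Haj\'os number of the symmetric cycle $D(C_{2^n+1})$ of order $2^n+1$ is at most $$\frac{n\left(2^{n+2}+n+5\right)}{2}-7.$$ Moreover, for every integer $m$ with $2^{n-1}+1<2m+1<2^n+1$, the Haj\'os number of the symmetric cycle $D(C_{2m+1})$ of order $2m+1$ is at most $$\frac{n\left(2^{n+2}+n+5\right)}{2}-5.$$
   Context: Digraphs are finite, without loops or multiple arcs. For a graph $G$, $D(G)$ is the symmetric digraph obtained by replacing each edge by a pair of opposite arcs; $D(K_3)$ is the complete symmetric digraph on 3 vertices and $D(C_k)$ the symmetric cycle of order $k$. The dichromatic number of a digraph is the minimum number of colors in a vertex coloring with no monochromatic directed cycle; odd symmetric cycles have dichromatic number 3. The directed Haj\'os operations are: (1) identifying a nonempty independent set $I$ of vertices: delete $I$, add a new vertex $v$, and add all arcs from $v$ to $\bigcup_{u\in I}N^+(u)$ and from $\bigcup_{u\in I}N^-(u)$ to $v$; (2) the directed Haj\'os join $(D_1,u_1,v_1)\triangledown(D_2,v_2,u_2)$ of disjoint digraphs $D_1,D_2$ with $u_1v_1\in A(D_1)$, $v_2u_2\in A(D_2)$: take the disjoint union, delete the arcs $u_1v_1$ and $v_2u_2$, identify $v_1$ and $v_2$ into a single vertex, and add the arc $u_1u_2$. The Haj\'os number of an $r$-dichromatic digraph $H$ is the minimum number of directed Haj\'os operations needed to obtain $H$ (up to isomorphism) from copies of the complete symmetric digraph $D(K_r)$, operations being applied to copies of $D(K_r)$ and to previously obtained digraphs. *)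

(* Defs.v *)
From mathcomp Require Import all_boot.
From Stdlib Require List.
Set Implicit Arguments. Unset Strict Implicit. Unset Printing Implicit Defensive.

Record digraph := Digraph { dsize : nat; darc : rel 'I_dsize }.
Arguments darc : clear implicits.

Definition diso (D1 D2 : digraph) : Prop :=
  exists f : 'I_(dsize D1) -> 'I_(dsize D2),
    bijective f /\ forall x y, darc D2 (f x) (f y) = darc D1 x y.

Definition DK (r : nat) : digraph := @Digraph r (fun i j => i != j).

Definition DC (k : nat) : digraph :=
  @Digraph k (fun i j => (nat_of_ord j == i.+1 %% k) || (nat_of_ord i == j.+1 %% k)).

(* D' is (isomorphic to) the digraph obtained from D by identifying the
   nonempty independent set I into a single new vertex.  phi is the quotient
   map: injective outside I, collapsing I to one vertex not hit by V\I,
   surjective, and the arcs of D' are exactly the images of the arcs of D. *)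
Definition identify_result (D : digraph) (I : {set 'I_(dsize D)}) (D' : digraph) : Prop :=
  I != set0 /\
  (forall x y, x \in I -> y \in I -> darc D x y = false) /\
  exists phi : 'I_(dsize D) -> 'I_(dsize D'),
    (forall x y, x \notin I -> y \notin I -> phi x = phi y -> x = y) /\
    (forall x y, x \in I -> y \in I -> phi x = phi y) /\
    (forall x y, x \in I -> y \notin I -> phi x <> phi y) /\
    (forall z, exists x, phi x = z) /\
    (forall a b, darc D' a b <->
       exists x y, [/\ phi x = a, phi y = b & darc D x y]).

(* D' is (isomorphic to) the directed Hajos join (D1,u1,v1) \/ (D2,v2,u2)
   of disjoint copies of D1 and D2.  phi1, phi2 embed the copies, whose images
   meet exactly in the identified vertex phi1 v1 = phi2 v2 and cover D'. *)
Definition hajos_join_result (D1 D2 : digraph)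
    (u1 v1 : 'I_(dsize D1)) (v2 u2 : 'I_(dsize D2)) (D' : digraph) : Prop :=
  darc D1 u1 v1 /\ darc D2 v2 u2 /\
  exists (phi1 : 'I_(dsize D1) -> 'I_(dsize D'))
         (phi2 : 'I_(dsize D2) -> 'I_(dsize D')),
    injective phi1 /\ injective phi2 /\
    (forall x y, phi1 x = phi2 y <-> x = v1 /\ y = v2) /\
    (forall z, (exists x, phi1 x = z) \/ (exists y, phi2 y = z)) /\
    (forall a b, darc D' a b <->
       [\/ a = phi1 u1 /\ b = phi2 u2,
           exists x y, [/\ phi1 x = a, phi1 y = b, darc D1 x y & (x, y) <> (u1, v1)]
         | exists x y, [/\ phi2 x = a, phi2 y = b, darc D2 x y & (x, y) <> (v2, u2)]]).

(* hconstr r s k : s is a directed Hajos construction sequence starting from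
   copies of D(K_r), using k directed Hajos operations in total. *)
Inductive hconstr (r : nat) : seq digraph -> nat -> Prop :=
| hc_nil : hconstr r [::] 0
| hc_base s k D : hconstr r s k -> diso D (DK r) -> hconstr r (rcons s D) k
| hc_ident s k D I D' : hconstr r s k -> List.In D s ->
    identify_result (D := D) I D' -> hconstr r (rcons s D') k.+1
| hc_join s k D1 D2 u1 v1 v2 u2 D' : hconstr r s k -> List.In D1 s -> List.In D2 s ->
    hajos_join_result (D1 := D1) (D2 := D2) u1 v1 v2 u2 D' ->
    hconstr r (rcons s D') k.+1.

Definition hajos_number_le (r : nat) (H : digraph) (B : nat) : Prop :=
  exists s k D, [/\ hconstr r (rcons s D) k, diso D H & k <= B].

(* Main.v *)
Require Import Defs.
From mathcomp Require Import all_boot.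
From mathcomp Require Import zify.
Set Implicit Arguments. Unset Strict Implicit. Unset Printing Implicit Defensive.

Definition ext (s s' : seq digraph) := forall x, List.In x s -> List.In x s'.

Lemma In_rcons (T : Type) (x y : T) s : List.In x s -> List.In x (rcons s y).
Proof. by rewrite -cats1 => H; apply: List.in_or_app; left. Qed.

Lemma In_rcons_last (T : Type) (y : T) s : List.In y (rcons s y).
Proof. by rewrite -cats1; apply: List.in_or_app; right; left. Qed.

Section Fold.
Variables (r : nat) (X H : digraph) (h : 'I_(dsize X) -> 'I_(dsize H)).
Hypothesis Hloop : forall a, darc H a a = false.
Hypothesis Hhom : forall x y, darc X x y -> darc H (h x) (h y).
Hypothesis Hsurj : forall z, exists x, h x = z.

Lemma ex_h y : exists x, h x == y.
Proof. by have [x <-] := Hsurj y; exists x. Qed.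

Definition rep y := xchoose (ex_h y).
Lemma h_rep y : h (rep y) = y.
Proof. exact/eqP/(xchooseP (ex_h y)). Qed.

Definition pr (P : seq 'I_(dsize H)) x := if h x \in P then rep (h x) else x.
Definition keep (P : seq 'I_(dsize H)) x := (h x \notin P) || (x == rep (h x)).

Lemma h_pr P x : h (pr P x) = h x.
Proof. by rewrite /pr; case: ifP => // _; rewrite h_rep. Qed.

Lemma keep_pr P x : keep P (pr P x).
Proof.
by rewrite /keep h_pr /pr; case: ifP => [_|] //=; rewrite h_rep eqxx orbT.
Qed.

Lemma pr_keep P x : keep P x -> pr P x = x.
Proof. by rewrite /keep /pr; case: ifP => // _ /= /eqP e; exact: esym e. Qed.

Lemma pr_cons t P x : pr (t :: P) (pr P x) = pr (t :: P) x.
Proof.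
case hin: (h x \in P).
  have -> : pr P x = rep (h x) by rewrite /pr hin.
  by rewrite /pr h_rep !inE hin orbT.
by have -> : pr P x = x by rewrite /pr hin.
Qed.

Local Notation Vt P := {x : 'I_(dsize X) | keep P x}.

Definition Qd P : digraph := @Digraph #|{: Vt P}| (fun i j =>
  [exists x, exists y, (pr P x == val (enum_val i)) && (pr P y == val (enum_val j)) && darc X x y]).

Definition Inv P (D : digraph) := exists e : 'I_(dsize D) -> 'I_(dsize X),
  [/\ injective e, forall a, keep P (e a), (forall x, keep P x -> exists a, e a = x) &
      forall a b, darc D a b = [exists x, exists y, (pr P x == e a) && (pr P y == e b) && darc X x y]].

Lemma Inv0 : Inv [::] X.
Proof.
have pr0 x : pr [::] x = x by rewrite /pr in_nil.
exists id; split; [by [] | by [] | by move=> x _; exists x |] => a b.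
apply/idP/idP => [ab|/existsP [x /existsP [y /andP[/andP[/eqP px /eqP py] xy]]]].
  by apply/existsP; exists a; apply/existsP; exists b; rewrite !pr0 !eqxx ab.
by move: px py xy; rewrite !pr0 => -> ->.
Qed.

Lemma Inv_step P D t : Inv P D -> t \notin P ->
  exists D' (I : {set 'I_(dsize D)}), identify_result I D' /\ Inv (t :: P) D'.
Proof.
move=> [e [einj ekeep esurj earc]] tP.
have keepP x : keep P x -> pr P x = x by apply: pr_keep.
pose phi a : 'I_(dsize (Qd (t :: P))) :=
  enum_rank (exist (fun x => keep (t :: P) x) (pr (t :: P) (e a)) (keep_pr _ _)).
have valphi a : val (enum_val (phi a)) = pr (t :: P) (e a) by rewrite enum_rankK.
pose I := [set a | h (e a) == t].
exists (Qd (t :: P)), I; split; last first.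
  exists (fun i => val (enum_val i)); split.
  - by move=> i j /val_inj /enum_val_inj.
  - by move=> i; apply: valP.
  - move=> x kx; exists (enum_rank (exist (fun x => keep (t :: P) x) x kx)).
    by rewrite enum_rankK.
  - by [].
have prne a : h (e a) != t -> pr (t :: P) (e a) = e a.
  move=> ne; rewrite /pr inE (negbTE ne) /=.
  by have := keepP _ (ekeep a); rewrite /pr; case: ifP.
have prin a : h (e a) = t -> pr (t :: P) (e a) = rep t.
  by move=> eq; rewrite /pr inE eq eqxx.
split.
  have kt : keep P (rep t) by rewrite /keep h_rep eqxx orbT.
  have [a ea] := esurj _ kt.
  apply/set0Pn; exists a; by rewrite inE ea h_rep.
split.
  move=> a b; rewrite !inE => /eqP ha /eqP hb; rewrite earc.
  apply/negbTE/existsP => [[x /existsP [y /andP[/andP[/eqP px /eqP py] xy]]]].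
  have := Hhom xy; rewrite -(h_pr P x) -(h_pr P y) px py ha hb.
  by rewrite Hloop.
exists phi; split; [|split; [|split; [|split]]].
- move=> a b; rewrite !inE => na nb /(congr1 (fun i => val (enum_val i))).
  rewrite !valphi prne // prne //; exact: einj.
- move=> a b; rewrite !inE => /eqP ha /eqP hb; apply: enum_val_inj; apply: val_inj.
  by rewrite !valphi !prin.
- move=> a b; rewrite !inE => /eqP ha nb /(congr1 (fun i => h (val (enum_val i)))).
  rewrite !valphi prin // prne // h_rep => eq.
  by move: nb; rewrite -eq eqxx.
- move=> z; set x := val (enum_val z); have kx : keep (t :: P) x := valP (enum_val z).
  suff [a ea] : exists a, pr (t :: P) (e a) = x.
    by exists a; apply: enum_val_inj; apply: val_inj; rewrite valphi ea.
  case: (boolP (h x == t)) => [/eqP hx|nhx].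
    have xr : x = rep t.
      by have := kx; rewrite /keep inE hx eqxx /= => /eqP.
    have kt : keep P (rep t) by rewrite /keep h_rep eqxx orbT.
    have [a ea] := esurj _ kt.
    by exists a; rewrite prin ?xr // ea h_rep.
  have kxP : keep P x.
    by have := kx; rewrite /keep inE (negbTE nhx) /=.
  have [a ea] := esurj _ kxP.
  by exists a; rewrite prne ea.
- move=> z w; split.
  + move=> /existsP [x /existsP [y /andP[/andP[/eqP px /eqP py] xy]]].
    have [a ea] := esurj _ (keep_pr P x).
    have [b eb] := esurj _ (keep_pr P y).
    exists a, b; split.
    * apply: enum_val_inj; apply: val_inj; by rewrite valphi ea pr_cons.
    * apply: enum_val_inj; apply: val_inj; by rewrite valphi eb pr_cons.
    * rewrite earc; apply/existsP; exists x; apply/existsP; exists y.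
      by rewrite ea eb !eqxx xy.
  + move=> [a [b [<- <- ab]]]; move: ab; rewrite earc.
    move=> /existsP [x /existsP [y /andP[/andP[/eqP px /eqP py] xy]]].
    apply/existsP; exists x; apply/existsP; exists y.
    by rewrite !valphi -px -py !pr_cons !eqxx xy.
Qed.

End Fold.

Lemma fold_lemma r s k X H (h : 'I_(dsize X) -> 'I_(dsize H)) (T : {set 'I_(dsize H)}) :
  hconstr r (rcons s X) k ->
  (forall a, darc H a a = false) ->
  (forall x y, darc X x y -> darc H (h x) (h y)) ->
  (forall a b, darc H a b -> exists x y, [/\ h x = a, h y = b & darc X x y]) ->
  (forall z, exists x, h x = z) ->
  (forall x1 x2, h x1 = h x2 -> h x1 \notin T -> x1 = x2) ->
  exists s' D, [/\ hconstr r (rcons s' D) (k + #|T|), ext (rcons s X) (rcons s' D) & diso D H].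
Proof.
move=> hc Hloop Hhom Hcov Hsurj Hfib.
have aux : forall l : seq 'I_(dsize H), uniq l -> exists s' D,
    [/\ hconstr r (rcons s' D) (k + size l), ext (rcons s X) (rcons s' D) & Inv Hsurj l D].
  elim => [|t l IH] /=.
    move=> _; exists s, X; rewrite addn0; split => //; exact: Inv0.
  move=> /andP [tl ul]; have [s' [D [hc' ex' inv']]] := IH ul.
  have [D' [I [idr inv'']]] := Inv_step Hloop Hhom inv' tl.
  exists (rcons s' D), D'; split => //.
  - rewrite addnS; apply: hc_ident hc' (In_rcons_last _ _) idr.
  - by move=> x hx; apply: In_rcons; apply: ex'.
have [s' [D [hc' ex' [e [einj ekeep esurj earc]]]]] := aux _ (enum_uniq (mem T)).
exists s', D; split => //.
  by rewrite -cardE in hc'.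
have memE y : (y \in enum T) = (y \in T) by rewrite mem_enum.
have key x a : h x = h (e a) -> pr Hsurj (enum T) x = e a.
  move=> hx; rewrite /pr memE; case: ifP => hin.
    by have := ekeep a; rewrite /keep memE -hx => /orP [/negP nh|/eqP ->].
  by apply: Hfib => //; rewrite hin.
have gex y : exists a, e a == rep Hsurj y.
  have kr : keep Hsurj (enum T) (rep Hsurj y) by rewrite /keep h_rep eqxx orbT.
  by have [a ea] := esurj _ kr; exists a; rewrite ea.
pose g y := xchoose (gex y).
have eg y : e (g y) = rep Hsurj y by apply/eqP/(xchooseP (gex y)).
exists (fun a => h (e a)); split.
  exists g.
  - move=> a; apply: einj; rewrite eg -{2}(key (rep Hsurj (h (e a))) a) ?h_rep //.
    by rewrite /pr h_rep; case: ifP.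
  - by move=> y; rewrite eg h_rep.
move=> a b; rewrite earc; apply/idP/idP.
  move=> /Hcov [x [y [hx hy xy]]].
  by apply/existsP; exists x; apply/existsP; exists y; rewrite (key x a hx) (key y b hy) !eqxx xy.
move=> /existsP [x /existsP [y /andP[/andP[/eqP px /eqP py] xy]]].
by rewrite -px -py !h_pr; apply: Hhom.
Qed.

Section Join.
Variables (D1 D2 : digraph) (u1 v1 : 'I_(dsize D1)) (v2 u2 : 'I_(dsize D2)).
Local Notation U := ('I_(dsize D1) + 'I_(dsize D2))%type.
Local Notation Vj := {z : U | z != inr v2}.

Lemma inl_ne (x : 'I_(dsize D1)) : (inl x : U) != inr v2.
Proof. by []. Qed.

Definition jphi1 (x : 'I_(dsize D1)) : 'I_#|{: Vj}| := enum_rank (exist _ (inl x : U) (inl_ne x)).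
Definition jphi2 (y : 'I_(dsize D2)) : 'I_#|{: Vj}| :=
  odflt (jphi1 v1) (omap enum_rank (insub (inr y : U) : option Vj)).

Definition jD : digraph := @Digraph #|{: Vj}| (fun i j =>
  [|| (i == jphi1 u1) && (j == jphi2 u2),
      [exists x, exists y, [&& jphi1 x == i, jphi1 y == j, darc D1 x y & (x, y) != (u1, v1)]] |
      [exists x, exists y, [&& jphi2 x == i, jphi2 y == j, darc D2 x y & (x, y) != (v2, u2)]]]).

Lemma jphi2_v2 : jphi2 v2 = jphi1 v1.
Proof. by rewrite /jphi2 insubF //= eqxx. Qed.

Lemma jphi2_ne y (ne : y != v2) : jphi2 y = enum_rank (exist (fun z : U => z != inr v2) (inr y) (ne : (inr y : U) != inr v2)).
Proof.
rewrite /jphi2 insubT //= => ne'; congr enum_rank; exact: val_inj.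
Qed.

Lemma jphi1_inj : injective jphi1.
Proof. by move=> x y /enum_rank_inj /(congr1 val) [] . Qed.

Lemma join_ok : darc D1 u1 v1 -> darc D2 v2 u2 -> hajos_join_result u1 v1 v2 u2 jD.
Proof.
move=> a1 a2; split => //; split => //.
exists jphi1, jphi2; split; first exact: jphi1_inj.
have j12 x y : jphi1 x = jphi2 y -> x = v1 /\ y = v2.
  case: (eqVneq y v2) => [->|ne]; first by rewrite jphi2_v2 => /jphi1_inj.
  by rewrite jphi2_ne => /enum_rank_inj /(congr1 val).
split.
  move=> x y; case: (eqVneq x v2) => [->|nx]; case: (eqVneq y v2) => [->|ny] //.
  - by rewrite jphi2_v2 => /j12 [_ ->].
  - by rewrite jphi2_v2 => /esym /j12 [_ ->].
  - by rewrite !jphi2_ne // => /enum_rank_inj /(congr1 val) [].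
split.
  move=> x y; split; first exact: j12.
  by move=> [-> ->]; rewrite jphi2_v2.
split.
  move=> z; case: (enum_val z) (enum_valK z) => -[x|y] p <-.
    by left; exists x; rewrite /jphi1; congr enum_rank; exact: val_inj.
  right; have ne : y != v2 by apply: contra p => /eqP ->.
  by exists y; rewrite jphi2_ne; congr enum_rank; exact: val_inj.
move=> a b; split.
  case/or3P => [/andP[/eqP -> /eqP ->]|/existsP[x /existsP[y /and4P[/eqP <- /eqP <- xy ne]]]
                |/existsP[x /existsP[y /and4P[/eqP <- /eqP <- xy ne]]]].
  - by constructor 1.
  - by constructor 2; exists x, y; split => //; apply/eqP.
  - by constructor 3; exists x, y; split => //; apply/eqP.
case => [[-> ->]|[x [y [<- <- xy /eqP ne]]]|[x [y [<- <- xy /eqP ne]]]]; apply/or3P.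
- by constructor 1; rewrite !eqxx.
- by constructor 2; apply/existsP; exists x; apply/existsP; exists y; rewrite !eqxx xy ne.
- by constructor 3; apply/existsP; exists x; apply/existsP; exists y; rewrite !eqxx xy ne.
Qed.

End Join.

Lemma join_step r s k D1 D2 u1 v1 v2 u2 :
  hconstr r s k -> List.In D1 s -> List.In D2 s -> darc D1 u1 v1 -> darc D2 v2 u2 ->
  hconstr r (rcons s (jD u1 v1 v2 u2)) k.+1.
Proof.
move=> hc i1 i2 a1 a2; apply: hc_join hc i1 i2 _; exact: join_ok.
Qed.

Lemma round r s D k D1 D2 A1 A2 H (g1 : 'I_(dsize A1) -> 'I_(dsize H))
    (g2 : 'I_(dsize A2) -> 'I_(dsize H)) (a1 b1 : 'I_(dsize A1)) (b2 a2 : 'I_(dsize A2))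
    (T : {set 'I_(dsize H)}) :
  hconstr r (rcons s D) k -> List.In D1 (rcons s D) -> List.In D2 (rcons s D) ->
  diso D1 A1 -> diso D2 A2 ->
  darc A1 a1 b1 -> darc A2 b2 a2 -> g1 b1 = g2 b2 ->
  (forall a, darc H a a = false) ->
  (forall x y, darc A1 x y -> (x, y) <> (a1, b1) -> darc H (g1 x) (g1 y)) ->
  (forall x y, darc A2 x y -> (x, y) <> (b2, a2) -> darc H (g2 x) (g2 y)) ->
  darc H (g1 a1) (g2 a2) ->
  (forall a b, darc H a b -> [\/ a = g1 a1 /\ b = g2 a2,
      exists x y, [/\ g1 x = a, g1 y = b, darc A1 x y & (x, y) <> (a1, b1)]
    | exists x y, [/\ g2 x = a, g2 y = b, darc A2 x y & (x, y) <> (b2, a2)]]) ->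
  (forall z, (exists x, g1 x = z) \/ (exists y, g2 y = z)) ->
  (forall z, z \notin T -> [/\ forall x x', g1 x = z -> g1 x' = z -> x = x',
       forall y y', g2 y = z -> g2 y' = z -> y = y'
     & forall x y, g1 x = z -> g2 y = z -> x = b1 /\ y = b2]) ->
  exists s' D', [/\ hconstr r (rcons s' D') (k.+1 + #|T|), ext (rcons s D) (rcons s' D') & diso D' H].
Proof.
move=> hc in1 in2 [f1 [[f1i f1K f1iK] f1a]] [f2 [[f2i f2K f2iK] f2a]] A1a A2a g12 Hloop
  hom1 hom2 cross Hcov Hsurj Hfib.
set u1 := f1i a1; set v1 := f1i b1; set v2 := f2i b2; set u2 := f2i a2.
have d1 : darc D1 u1 v1 by rewrite -f1a !f1iK.
have d2 : darc D2 v2 u2 by rewrite -f2a !f2iK.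
have hc' := join_step hc in1 in2 d1 d2.
set J := jD u1 v1 v2 u2 in hc'.
have [_ [_ [p1 [p2 [i1 [i2 [cap [cov jarc]]]]]]]] := join_ok d1 d2.
pose G1 x := g1 (f1 x). pose G2 y := g2 (f2 y).
have G12 : G1 v1 = G2 v2 by rewrite /G1 /G2 /v1 /v2 !f1iK f2iK.
pose hh (z : 'I_(dsize J)) : 'I_(dsize H) :=
  if [pick x | p1 x == z] is Some x then G1 x
  else if [pick y | p2 y == z] is Some y then G2 y else G1 u1.
have hh1 x : hh (p1 x) = G1 x.
  rewrite /hh; case: pickP => [x' /eqP /i1 -> //|/(_ x)]; by rewrite eqxx.
have hh2 y : hh (p2 y) = G2 y.
  rewrite /hh; case: pickP => [x' /eqP /cap [-> ->] //|_].
  case: pickP => [y' /eqP /i2 -> //|/(_ y)]; by rewrite eqxx.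
have homh : forall x y, darc J x y -> darc H (hh x) (hh y).
  move=> x y /jarc; case.
  + by move=> [-> ->]; rewrite hh1 hh2 /G1 /G2 f1iK f2iK.
  + move=> [x' [y' [<- <- xy ne]]]; rewrite !hh1; apply: hom1; first by rewrite f1a.
    by move=> [ex ey]; apply: ne; rewrite /u1 /v1 -ex -ey !f1K.
  + move=> [x' [y' [<- <- xy ne]]]; rewrite !hh2; apply: hom2; first by rewrite f2a.
    by move=> [ex ey]; apply: ne; rewrite /u2 /v2 -ex -ey !f2K.
have covh : forall a b, darc H a b -> exists x y, [/\ hh x = a, hh y = b & darc J x y].
  move=> a b /Hcov; case.
  + move=> [-> ->]; exists (p1 u1), (p2 u2); rewrite hh1 hh2 /G1 /G2 f1iK f2iK; split => //.
    by apply/jarc; constructor 1.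
  + move=> [x [y [<- <- xy ne]]]; exists (p1 (f1i x)), (p1 (f1i y)).
    rewrite !hh1 /G1 !f1iK; split => //; apply/jarc; constructor 2.
    exists (f1i x), (f1i y); split => //; first by rewrite -f1a !f1iK.
    by move=> [ex ey]; apply: ne; rewrite -(f1iK x) -(f1iK y) ex ey /u1 /v1 !f1iK.
  + move=> [x [y [<- <- xy ne]]]; exists (p2 (f2i x)), (p2 (f2i y)).
    rewrite !hh2 /G2 !f2iK; split => //; apply/jarc; constructor 3.
    exists (f2i x), (f2i y); split => //; first by rewrite -f2a !f2iK.
    by move=> [ex ey]; apply: ne; rewrite -(f2iK x) -(f2iK y) ex ey /u2 /v2 !f2iK.
have surjh : forall z, exists x, hh x = z.
  move=> z; case: (Hsurj z) => [[x <-]|[y <-]].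
    by exists (p1 (f1i x)); rewrite hh1 /G1 f1iK.
  by exists (p2 (f2i y)); rewrite hh2 /G2 f2iK.
have fibh : forall z1 z2, hh z1 = hh z2 -> hh z1 \notin T -> z1 = z2.
  move=> z1 z2.
  case: (cov z1) => [[x1 <-]|[y1 <-]]; case: (cov z2) => [[x2 <-]|[y2 <-]];
    rewrite ?hh1 ?hh2 => e hT; have [F1 F2 F12] := Hfib _ hT.
  + by congr p1; apply: (can_inj f1K); exact: F1 _ _ erefl (esym e).
  + have [ex ey] := F12 _ _ erefl (esym e).
    have -> : x1 = v1 by rewrite -(f1K x1) ex.
    have -> : y2 = v2 by rewrite -(f2K y2) ey.
    by apply/cap.
  + have [ex ey] := F12 _ _ (esym e) erefl.
    have -> : x2 = v1 by rewrite -(f1K x2) ex.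
    have -> : y1 = v2 by rewrite -(f2K y1) ey.
    by apply/esym/cap.
  + by congr p2; apply: (can_inj f2K); exact: F2 _ _ erefl (esym e).
have [s' [D' [hcf exf iso]]] := fold_lemma hc' Hloop homh covh surjh fibh.
exists s', D'; split => //.
by move=> x hx; apply: exf; apply: In_rcons.
Qed.

Variant modL_spec (L a : nat) : nat -> Type :=
| ModLlt of a < L : modL_spec L a a
| ModLge of L <= a : modL_spec L a (a - L).

Lemma modLP L a : a < 2 * L -> modL_spec L a (a %% L).
Proof.
move=> lt; case: (ltnP a L) => [al|la].
  by rewrite modn_small //; constructor.
have -> : a %% L = a - L.
  rewrite -{1}(subnK la) modnDr modn_small //; lia.
by constructor.
Qed.

Section Wsec.
Variable m : nat.
Hypothesis m2 : 2 <= m.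
Local Notation L := (2 * m).+1.

Lemma L_pos : 0 < L. Proof. by []. Qed.

Definition cyc (i j : nat) := (j == i.+1 %% L) || (i == j.+1 %% L).

Definition W (ch : pred nat) (mi : nat -> nat -> bool) : digraph :=
  @Digraph L (fun i j => (cyc i j && ~~ mi i j) || (ch i && (nat_of_ord j == (i + m) %% L))).

Definition rotc (t : nat) (i : 'I_L) : 'I_L := Ordinal (ltn_pmod (i + t) L_pos).
Definition unrotc (t : nat) (i : 'I_L) : 'I_L := rotc (L - t %% L) i.

End Wsec.

Ltac kill_mod :=
  repeat match goal with
  | |- context [?a %% ?L] =>
      lazymatch a with context [_ %% _] => fail | _ => idtac end;
      let Ha := fresh "Ha" in
      (have Ha : a < 2 * L by lia); case: (modLP Ha); clear Ha; try move=> ?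
  end.

Section Wlem.
Variable m : nat.
Hypothesis m2 : 2 <= m.
Local Notation L := (2 * m).+1.
Local Notation rotc := (@rotc m).
Local Notation unrotc := (@unrotc m).
Local Notation cyc := (@cyc m).

Lemma rotE t (i : 'I_L) : val (rotc t i) = (i + t) %% L.
Proof. by []. Qed.

Lemma rotK t : t < L -> cancel (rotc t) (unrotc t).
Proof.
move=> tL i; apply: val_inj; rewrite /unrotc !rotE /=.
have := ltn_ord i; rewrite (modn_small tL) => ?; kill_mod; lia.
Qed.

Lemma unrotK t : t < L -> cancel (unrotc t) (rotc t).
Proof.
move=> tL i; apply: val_inj; rewrite /unrotc !rotE /=.
have := ltn_ord i; rewrite (modn_small tL) => ?; kill_mod; lia.
Qed.

Lemma rot_inj t : t < L -> injective (rotc t).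
Proof. by move=> tL; apply: can_inj (rotK tL). Qed.

Lemma rot_cyc t (x y : 'I_L) : t <= L -> cyc (rotc t x) (rotc t y) = cyc x y.
Proof.
move=> tL; rewrite /cyc !rotE.
have := ltn_ord x; have := ltn_ord y => ? ?; kill_mod; lia.
Qed.

Lemma rot_chord t (x y : 'I_L) : t <= L ->
  (nat_of_ord (rotc t y) == (rotc t x + m) %% L) = (nat_of_ord y == (x + m) %% L).
Proof.
move=> tL; rewrite /rotc /=.
have := ltn_ord x; have := ltn_ord y => ? ?; kill_mod; lia.
Qed.

Lemma cyc_nchord (x y : 'I_L) : cyc x y -> (nat_of_ord y == (x + m) %% L) = false.
Proof.
rewrite /cyc; have := ltn_ord x; have := ltn_ord y => ? ?; kill_mod; lia.
Qed.

Lemma W_loop ch mi (a : 'I_L) : darc (W m ch mi) a a = false.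
Proof.
rewrite /= /cyc; have := ltn_ord a => ?; kill_mod; lia.
Qed.

End Wlem.

Section Wround.
Variable m : nat.
Hypothesis m2 : 2 <= m.
Local Notation L := (2 * m).+1.

Lemma ltL_mod x : x %% L < L. Proof. exact: ltn_pmod. Qed.

Lemma modC1 (x t : nat) : x < L -> t <= L -> ((x + m) %% L + t) %% L = ((x + t) %% L + m) %% L.
Proof. move=> ? ?; kill_mod; lia. Qed.

Lemma cross_fact (a b t1 t2 : nat) : a < L -> b < L -> t1 < L -> t2 < L ->
  ((a + m) %% L + t1) %% L = (b + t2) %% L ->
  cyc m ((a + t1) %% L) (((b + m) %% L + t2) %% L).
Proof. rewrite /cyc => ? ? ? ?; kill_mod; lia. Qed.

Lemma W_round r s D k D1 D2 (ch1 ch2 ch : pred nat) (mi1 mi2 : nat -> nat -> bool) (a b : 'I_L) (t1 t2 : nat) :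
  t1 < L -> t2 < L ->
  hconstr r (rcons s D) k -> List.In D1 (rcons s D) -> List.In D2 (rcons s D) ->
  diso D1 (W m ch1 mi1) -> diso D2 (W m ch2 mi2) ->
  ch1 a -> ch2 b ->
  ((a + m) %% L + t1) %% L = (b + t2) %% L ->
  (forall x : 'I_L, ch1 x -> x != a -> ch (rotc t1 x)) ->
  (forall y : 'I_L, ch2 y -> y != b -> ch (rotc t2 y)) ->
  (forall z : 'I_L, ch z -> (exists x : 'I_L, [/\ ch1 x, x != a & rotc t1 x = z])
                         \/ (exists y : 'I_L, [/\ ch2 y, y != b & rotc t2 y = z])) ->
  (forall x y : 'I_L, cyc m x y -> mi1 x y -> exists x' y' : 'I_L,
      [/\ cyc m x' y', ~~ mi2 x' y', rotc t2 x' = rotc t1 x & rotc t2 y' = rotc t1 y]) ->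
  exists s' D', [/\ hconstr r (rcons s' D') (k + L), ext (rcons s D) (rcons s' D')
                  & diso D' (W m ch (fun _ _ => false))].
Proof.
move=> t1L t2L hc in1 in2 iso1 iso2 cha chb glue Hch1 Hch2 Hch Hmi.
pose b1 : 'I_L := Ordinal (ltL_mod (a + m)).
pose a2 : 'I_L := Ordinal (ltL_mod (b + m)).
have t1L' : t1 <= L by apply: ltnW.
have t2L' : t2 <= L by apply: ltnW.
have g12 : rotc t1 b1 = rotc t2 b by apply: val_inj; rewrite /= glue.
suff [s' [D' [hc' ex' iso']]] : exists s' D', [/\ hconstr r (rcons s' D') (k.+1 + #|[set~ rotc t1 b1]|),
     ext (rcons s D) (rcons s' D') & diso D' (W m ch (fun _ _ => false))].
  by exists s', D'; split => //; rewrite cardsC1 card_ord addSn -addnS in hc'.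
apply: (@round r s D k D1 D2 (W m ch1 mi1) (W m ch2 mi2)
   (W m ch (fun _ _ => false)) (rotc t1) (rotc t2) a b1 b a2 [set~ rotc t1 b1]
   hc in1 in2 iso1 iso2).
- by rewrite /= cha eqxx orbT.
- by rewrite /= chb eqxx orbT.
- exact: g12.
- exact: (W_loop m2).
- move=> x y /= /orP [/andP [cxy _]|/andP [chx /eqP ey]] ne.
    by rewrite rot_cyc // cxy.
  have xa : x != a.
    apply/eqP => xa; apply: ne; congr pair => //; apply: val_inj => /=; by rewrite ey xa.
  by rewrite Hch1 // rot_chord // ey eqxx orbT.
- move=> x y /= /orP [/andP [cxy _]|/andP [chx /eqP ey]] ne.
    by rewrite rot_cyc // cxy.
  have xb : x != b.
    apply/eqP => xb; apply: ne; congr pair => //; apply: val_inj => /=; by rewrite ey xb.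
  by rewrite Hch2 // rot_chord // ey eqxx orbT.
- apply/orP; left; rewrite andbT /rotc /=.
  by apply: cross_fact.
- move=> i j /= /orP [/andP [cij _]|/andP [chi /eqP ej]].
    have [x ix] : exists x, rotc t1 x = i by exists (unrotc t1 i); rewrite unrotK.
    have [y iy] : exists y, rotc t1 y = j by exists (unrotc t1 j); rewrite unrotK.
    have cxy : cyc m x y by rewrite -(rot_cyc m2 x y t1L') ix iy.
    case mxy: (mi1 x y).
      have [x' [y' [cxy' nm ex ey]]] := Hmi _ _ cxy mxy.
      constructor 3; exists x', y'; split.
      + by rewrite ex ix.
      + by rewrite ey iy.
      + by rewrite /= cxy' nm.
      + by move=> [ex' ey']; move: cxy'; rewrite ex' ey' => /(cyc_nchord m2); rewrite /= eqxx.
    constructor 2; exists x, y; split => //.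
    + by rewrite /= cxy mxy.
    + by move=> [ex ey]; move: cxy; rewrite ex ey => /(cyc_nchord m2); rewrite /= eqxx.
  have [[x [chx xa ex]]|[y [chy yb ey]]] := Hch _ chi.
    pose y : 'I_L := Ordinal (ltL_mod (x + m)).
    constructor 2; exists x, y; split => //.
    + apply: val_inj => /=; rewrite ej -ex /y /rotc /= modC1 //.
    + by rewrite /= chx eqxx orbT.
    + by move=> [ex' _]; move: xa; rewrite ex' eqxx.
  pose x : 'I_L := Ordinal (ltL_mod (y + m)).
  constructor 3; exists y, x; split => //.
  + apply: val_inj => /=; rewrite ej -ey /x /rotc /= modC1 //.
  + by rewrite /= chy eqxx orbT.
  + by move=> [ey' _]; move: yb; rewrite ey' eqxx.
- by move=> z; left; exists (unrotc t1 z); rewrite unrotK.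
- move=> z; rewrite !inE negbK => /eqP ->; split.
  + by move=> x x' /(rot_inj m2 t1L) -> /(rot_inj m2 t1L) ->.
  + by move=> y y'; rewrite g12 => /(rot_inj m2 t2L) -> /(rot_inj m2 t2L) ->.
  + by move=> x y /(rot_inj m2 t1L) ->; rewrite g12 => /(rot_inj m2 t2L) ->.
Qed.

End Wround.

Section Jsec.
Variable m : nat.
Hypothesis m2 : 2 <= m.
Local Notation L := (2 * m).+1.
Local Notation M := m.+1.

Definition chJ (x : nat) := (x == 0) || (x == m.+1).
Definition miJ (i j : nat) := (i == m.+1) && (j == m).

Definition dca (x y : nat) := (y == x.+1 %% M) || (x == y.+1 %% M).
Definition Wa ch mi (i j : nat) := (cyc m i j && ~~ mi i j) || (ch i && (j == (i + m) %% L)).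
Definition j2 (x : nat) := if x == 0 then 0 else x + m.
Definition i2 (i : nat) := if i == 0 then 0 else i - m.

Lemma J_hom1 x y : x < M -> y < M -> dca x y -> ~~ ((x == m) && (y == 0)) -> Wa chJ miJ x y.
Proof. rewrite /dca /Wa /cyc /chJ /miJ => ? ?; kill_mod; lia. Qed.

Lemma J_hom2 x y : x < M -> y < M -> dca x y -> ~~ ((x == 0) && (y == 1)) -> Wa chJ miJ (j2 x) (j2 y).
Proof. rewrite /dca /Wa /cyc /chJ /miJ /j2 => ? ?; do 2 case: ifP => ?; kill_mod; lia. Qed.

Lemma J_cross : Wa chJ miJ m (j2 1).
Proof. rewrite /Wa /cyc /chJ /miJ /j2 /=; kill_mod; lia. Qed.

Lemma J_cov1 i j : i < M -> j < M -> Wa chJ miJ i j -> ~~ ((i == m) && (j == m.+1)) ->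
  dca i j && ~~ ((i == m) && (j == 0)).
Proof. rewrite /dca /Wa /cyc /chJ /miJ => ? ?; kill_mod; lia. Qed.

Lemma J_cov2a i j : i < L -> j < L -> Wa chJ miJ i j -> ~~ ((i < M) && (j < M)) ->
  ~~ ((i == m) && (j == m.+1)) -> ((i == 0) || (m < i)) && ((j == 0) || (m < j)).
Proof. rewrite /Wa /cyc /chJ /miJ => ? ?; kill_mod; lia. Qed.

Lemma J_cov2b i j : i < L -> j < L -> Wa chJ miJ i j -> ~~ ((i < M) && (j < M)) ->
  ~~ ((i == m) && (j == m.+1)) -> dca (i2 i) (i2 j) && ~~ ((i2 i == 0) && (i2 j == 1)).
Proof.
move=> iL jL w nM nc; have := J_cov2a iL jL w nM nc; move: w nM nc.
rewrite /dca /Wa /cyc /chJ /miJ /i2.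
case: (i =P 0) => [->|_]; case: (j =P 0) => [->|_]; kill_mod; lia.
Qed.

End Jsec.

Section Jstep.
Variable m : nat.
Hypothesis m2 : 2 <= m.
Local Notation L := (2 * m).+1.
Local Notation M := m.+1.

Lemma j2_lt x : x < M -> j2 m x < L.
Proof. rewrite /j2; case: ifP => _ ?; lia. Qed.
Lemma i2_lt i : i < L -> i2 m i < M.
Proof. rewrite /i2; case: ifP => _ ?; lia. Qed.
Lemma j2i2 i : (i == 0) || (m < i) -> j2 m (i2 m i) = i.
Proof. rewrite /i2 /j2; case: (i =P 0) => [->|_] //= ?; case: ifP => ?; lia. Qed.
Lemma j2_inj x y : x < M -> y < M -> j2 m x = j2 m y -> x = y.
Proof. rewrite /j2; case: ifP => ?; case: ifP => ? ? ? ?; lia. Qed.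
Lemma j2_g1 x y : x < M -> y < M -> x = j2 m y -> x = 0 /\ y = 0.
Proof. rewrite /j2; case: ifP => ? ? ? ?; lia. Qed.

Definition g1J (x : 'I_M) : 'I_L := inord x.
Definition g2J (x : 'I_M) : 'I_L := inord (j2 m x).
Lemma g1E x : nat_of_ord (g1J x) = x.
Proof. by rewrite inordK //; have := ltn_ord x; lia. Qed.
Lemma g2E x : nat_of_ord (g2J x) = j2 m x.
Proof. by rewrite inordK // ltnS -ltnS; apply: j2_lt. Qed.

Lemma g1V x : val (g1J x) = x. Proof. exact: g1E. Qed.
Lemma g2V x : val (g2J x) = j2 m x. Proof. exact: g2E. Qed.

Lemma J_step r s D k C : hconstr r (rcons s D) k -> List.In C (rcons s D) -> diso C (DC M) ->
  exists s' D', [/\ hconstr r (rcons s' D') k.+1, ext (rcons s D) (rcons s' D')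
                  & diso D' (W m (chJ m) (miJ m))].
Proof.
move=> hc inC iso.
have ML : M <= (2 * m).+1 by lia.
have in1 : (1 : nat) < M by lia.
have i1E : nat_of_ord (inord 1 : 'I_M) = 1 by rewrite inordK.
suff [s' [D' [hc' ex' iso']]] : exists s' D', [/\ hconstr r (rcons s' D') (k.+1 + #|(set0 : {set 'I_L})|),
     ext (rcons s D) (rcons s' D') & diso D' (W m (chJ m) (miJ m))].
  by exists s', D'; rewrite cards0 addn0 in hc'.
apply: (@round r s D k C C (DC M) (DC M) (W m (chJ m) (miJ m)) g1J g2J ord_max ord0 ord0 (inord 1) set0
   hc inC inC iso iso).
- by rewrite /= modnn eqxx.
- by rewrite /= i1E modn_small.
- by apply: val_inj; rewrite g1V ?g2V.
- exact: (W_loop m2).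
- move=> x y xy ne; change (Wa m (chJ m) (miJ m) (g1J x) (g1J y)); rewrite !g1E.
  apply: (J_hom1 m2) => //.
  apply/negP => /andP [/eqP xm /eqP y0]; apply: ne; congr pair; exact: val_inj.
- move=> x y xy ne; change (Wa m (chJ m) (miJ m) (g2J x) (g2J y)); rewrite !g2E.
  apply: (J_hom2 m2) => //.
  apply/negP => /andP [/eqP x0 /eqP y1]; apply: ne; congr pair; apply: val_inj => //=.
  by rewrite i1E.
- change (Wa m (chJ m) (miJ m) (g1J ord_max) (g2J (inord 1))); rewrite g1E g2E i1E.
  exact: (J_cross m2).
- move=> a b ab; change (is_true (Wa m (chJ m) (miJ m) a b)) in ab.
  case: (boolP ((nat_of_ord a == m) && (nat_of_ord b == m.+1))) => [/andP [/eqP am /eqP bm]|nc].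
    constructor 1; split; apply: val_inj => /=; by rewrite ?g1E ?g2E ?i1E.
  case: (boolP ((nat_of_ord a < M) && (nat_of_ord b < M))) => [/andP [aM bM]|nM].
    have /andP [d nd] := J_cov1 m2 aM bM ab nc.
    constructor 2; exists (inord a), (inord b); split.
    + by apply: val_inj; rewrite /= g1E inordK.
    + by apply: val_inj; rewrite /= g1E inordK.
    + by rewrite /= !inordK.
    + move=> [ea eb]; move: nd; rewrite -(inordK aM) -(inordK bM) ea eb /=; by rewrite eqxx.
  have /andP [a0 b0] := J_cov2a m2 (ltn_ord a) (ltn_ord b) ab nM nc.
  have /andP [d nd] := J_cov2b m2 (ltn_ord a) (ltn_ord b) ab nM nc.
  have ia := i2_lt (ltn_ord a); have ib := i2_lt (ltn_ord b).
  constructor 3; exists (inord (i2 m a)), (inord (i2 m b)); split.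
  + by apply: val_inj; rewrite /= g2E inordK // j2i2.
  + by apply: val_inj; rewrite /= g2E inordK // j2i2.
  + by rewrite /= !inordK.
  + move=> [ea eb]; move: nd; rewrite -(inordK ia) -(inordK ib) ea eb /= i1E; by rewrite eqxx.
- case=> z zl; have zl' : z < (2 * m).+1 := zl; case: (ltnP z M) => zM.
    by left; exists (inord z); apply: val_inj; rewrite g1V /= inordK.
  have zm : z - m < M by lia.
  right; exists (inord (z - m)); apply: val_inj; rewrite g2V /= inordK // /j2.
  case: ifP => ?; lia.
- move=> z _; split.
  + by move=> x x' <- /(congr1 (@nat_of_ord _)); rewrite !g1E => e; apply: val_inj.
  + move=> y y' <- /(congr1 (@nat_of_ord _)); rewrite !g2E => e; apply: val_inj.
    exact: j2_inj (ltn_ord _) (ltn_ord _) (esym e).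
  + move=> x y <- /(congr1 (@nat_of_ord _)); rewrite g1E g2E => e.
    have [x0 y0] := j2_g1 (ltn_ord x) (ltn_ord y) (esym e).
    by split; apply: val_inj.
Qed.

End Jstep.
Set Implicit Arguments. Unset Strict Implicit. Unset Printing Implicit Defensive.

Section Rounds.
Variable m : nat.
Hypothesis m2 : 2 <= m.
Local Notation L := (2 * m).+1.

Definition Sst (e : nat) := W m (fun x => (x == 0) || (x == e)) (fun _ _ => false).
Definition Fst := W m (fun x => x == 0) (fun _ _ => false).

Lemma inordE k : k < L -> nat_of_ord (inord k : 'I_L) = k.
Proof. by move=> kL; rewrite inordK. Qed.

Lemma rotN t (i : 'I_L) : nat_of_ord (rotc t i) = (i + t) %% L.
Proof. by []. Qed.

Lemma neqO (x y : 'I_L) : (x != y) = (nat_of_ord x != nat_of_ord y).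
Proof. by []. Qed.

Lemma R1 r s D k D1 : hconstr r (rcons s D) k -> List.In D1 (rcons s D) ->
  diso D1 (W m (chJ m) (miJ m)) ->
  exists s' D', [/\ hconstr r (rcons s' D') (k + L), ext (rcons s D) (rcons s' D') & diso D' (Sst (m - 1))].
Proof.
move=> hc in1 iso1.
have mL : m < L by lia.
have m1L : m.+1 < L by lia.
have m2L : m.+2 < L by lia.
rewrite /Sst; apply: (@W_round m m2 r s D k D1 D1 (chJ m) (chJ m) (fun x => (x == 0) || (x == m - 1)) (miJ m) (miJ m) (inord 0) (inord m.+1) m (m - 1)) => //.
- lia.
- by rewrite inordE.
- by rewrite inordE // /chJ eqxx orbT.
- rewrite !inordE //; kill_mod; lia.
- move=> x; rewrite /chJ neqO inordE // rotN => + ?; have := ltn_ord x => xl.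
  kill_mod; lia.
- move=> y; rewrite /chJ neqO inordE // rotN => + ?; have := ltn_ord y => yl.
  kill_mod; lia.
- move=> z; have zl := ltn_ord z; case/orP => /eqP ez.
    left; exists (inord m.+1); split.
    + by rewrite inordE // /chJ eqxx orbT.
    + by rewrite neqO !inordE.
    + apply: val_inj; rewrite /= inordE // ez; kill_mod; lia.
  right; exists (inord 0); split.
  + by rewrite inordE.
  + by rewrite neqO !inordE.
  + apply: val_inj; rewrite /= inordE // ez; kill_mod; lia.
- move=> x y _; rewrite /miJ => /andP [/eqP ex /eqP ey].
  exists (inord m.+2), (inord m.+1); split.
  + rewrite !inordE // /cyc; kill_mod; lia.
  + by rewrite /miJ !inordE //; apply/negP => /andP [/eqP ? _]; lia.
  + apply: val_inj; rewrite /= !inordE // ex; kill_mod; lia.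
  + apply: val_inj; rewrite /= !inordE // ey; kill_mod; lia.
Qed.

Lemma Rgen r s D k D1 e : 0 < e < m -> hconstr r (rcons s D) k -> List.In D1 (rcons s D) ->
  diso D1 (Sst e) ->
  exists s' D', [/\ hconstr r (rcons s' D') (k + L), ext (rcons s D) (rcons s' D') & diso D' (Sst ((2 * e + m) %% L))].
Proof.
move=> /andP [e0 em] hc in1 iso1.
have eL : e < L by lia.
rewrite /Sst; apply: (@W_round m m2 r s D k D1 D1 (fun x => (x == 0) || (x == e)) (fun x => (x == 0) || (x == e))
   (fun x => (x == 0) || (x == (2 * e + m) %% L)) (fun _ _ => false) (fun _ _ => false)
   (inord e) (inord 0) 0 (e + m)) => //.
- lia.
- by rewrite inordE // eqxx orbT.
- by rewrite inordE.
- rewrite !inordE //; kill_mod; lia.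
- move=> x; rewrite neqO inordE // rotN => + ?; have := ltn_ord x => xl.
  kill_mod; lia.
- move=> y; rewrite neqO inordE // rotN => + ?; have := ltn_ord y => yl.
  kill_mod; lia.
- move=> z; have zl := ltn_ord z; case/orP => /eqP ez.
    left; exists (inord 0); split.
    + by rewrite inordE.
    + by rewrite neqO !inordE //; lia.
    + apply: val_inj; rewrite /= inordE // ez; kill_mod; lia.
  right; exists (inord e); split.
  + by rewrite inordE // eqxx orbT.
  + by rewrite neqO !inordE //; lia.
  + apply: val_inj; rewrite /= inordE // ez; kill_mod; lia.
Qed.

Lemma Rpair r s D k D1 D2 : hconstr r (rcons s D) k -> List.In D1 (rcons s D) -> List.In D2 (rcons s D) ->
  diso D1 (Sst 1) -> diso D2 (W m (chJ m) (miJ m)) ->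
  exists s' D', [/\ hconstr r (rcons s' D') (k + L), ext (rcons s D) (rcons s' D') & diso D' Fst].
Proof.
move=> hc in1 in2 iso1 iso2.
have m1L : m.+1 < L by lia.
have o1 : nat_of_ord (inord 1 : 'I_L) = 1 by rewrite inordE //; lia.
rewrite /Fst; apply: (@W_round m m2 r s D k D1 D2 (fun x => (x == 0) || (x == 1)) (chJ m)
   (fun x => x == 0) (fun _ _ => false) (miJ m) (inord 1) (inord m.+1) 0 0 _ _ hc in1 in2 iso1 iso2) => //.
- by rewrite o1.
- by rewrite inordE // /chJ eqxx orbT.
- rewrite o1 !inordE //; kill_mod; lia.
- move=> x; rewrite neqO o1 rotN => + ?; have := ltn_ord x => xl.
  kill_mod; lia.
- move=> y; rewrite /chJ neqO inordE // rotN => + ?; have := ltn_ord y => yl.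
  kill_mod; lia.
- move=> z; have zl := ltn_ord z; move=> /eqP ez.
  left; exists (inord 0); split.
  + by rewrite inordE.
  + by rewrite neqO o1 inordE.
  + apply: val_inj; rewrite /= inordE // ez; kill_mod; lia.
Qed.

Lemma Rfin r s D k D1 : hconstr r (rcons s D) k -> List.In D1 (rcons s D) -> diso D1 Fst ->
  exists s' D', [/\ hconstr r (rcons s' D') (k + L), ext (rcons s D) (rcons s' D')
                  & diso D' (W m (fun _ => false) (fun _ _ => false))].
Proof.
move=> hc in1 iso1.
rewrite /Fst in iso1.
apply: (@W_round m m2 r s D k D1 D1 (fun x => x == 0) (fun x => x == 0)
   (fun _ => false) (fun _ _ => false) (fun _ _ => false) (inord 0) (inord 0) 0 m) => //.
- lia.
- by rewrite inordE.
- by rewrite inordE.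
- rewrite !inordE //; kill_mod; lia.
- by move=> x /eqP x0; rewrite neqO inordE // x0.
- by move=> x /eqP x0; rewrite neqO inordE // x0.
Qed.

Lemma W0_DC : diso (W m (fun _ => false) (fun _ _ => false)) (DC L).
Proof.
exists id; split; first by exists id.
by move=> x y; rewrite /= andbT orbF.
Qed.

End Rounds.
Set Implicit Arguments. Unset Strict Implicit. Unset Printing Implicit Defensive.

Section Shrink.
Variables (q j : nat).
Hypothesis q2 : 2 <= q.
Hypothesis j1 : 1 <= j.
Local Notation K := (2 * q).+1.
Local Notation L := (2 * q + 2 * j).+1.

Definition dcn (N a b : nat) := (b == a.+1 %% N) || (a == b.+1 %% N).
Definition fsh (i : nat) := if i <= 2 * j then i %% 2 else i - 2 * j.
Definition pw (a b : nat) := if a == 0 then 0 else if b == 0 then (if a == 1 then 1 else L.-1) else a + 2 * j.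

Ltac gen2 i := move: (divn_eq i 2) (@ltn_pmod i 2 isT); move: (i %/ 2) (i %% 2) => ? ? ? ?.

Lemma sh_hom i i' : i < L -> i' < L -> dcn L i i' -> dcn K (fsh i) (fsh i').
Proof.
rewrite /dcn /fsh => ? ?; gen2 i; gen2 i'; do 2 case: ifP => ?; kill_mod; lia.
Qed.

Lemma sh_cov a b : a < K -> b < K -> dcn K a b ->
  [&& pw a b < L, pw b a < L, fsh (pw a b) == a, fsh (pw b a) == b & dcn L (pw a b) (pw b a)].
Proof.
rewrite /dcn /fsh /pw => ? ?.
case: (a =P 0) => [->|?]; case: (b =P 0) => [->|?]; rewrite ?eqxx //=.
all: try case: (a =P 1) => [->|?]; try case: (b =P 1) => [->|?]; rewrite ?eqxx //=.
all: rewrite ?mod0n; kill_mod.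
all: try (do ?case: ifP => ?); kill_mod; try lia.
Qed.

Lemma sh_surj z : z < K -> (if z < 2 then z else z + 2 * j) < L /\ fsh (if z < 2 then z else z + 2 * j) = z.
Proof. rewrite /fsh => ?; case: ifP => ?; case: ifP => ?; rewrite ?modn_small //; lia. Qed.

Lemma sh_fib i i' : i < L -> i' < L -> fsh i = fsh i' -> 2 <= fsh i -> i = i'.
Proof. rewrite /fsh => ? ?; gen2 i; gen2 i'; do 2 case: ifP => ?; lia. Qed.

Lemma sh_lt i : i < L -> fsh i < K.
Proof. rewrite /fsh => ?; gen2 i; case: ifP => ?; lia. Qed.

End Shrink.
Set Implicit Arguments. Unset Strict Implicit. Unset Printing Implicit Defensive.

Lemma ext_trans a b c : ext a b -> ext b c -> ext a c.
Proof. by move=> h1 h2 x /h1 /h2. Qed.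

Lemma diso_trans A B C : diso A B -> diso B C -> diso A C.
Proof.
move=> [f [bf af]] [g [bg ag]]; exists (g \o f); split; first exact: bij_comp.
by move=> x y /=; rewrite ag af.
Qed.

Lemma iterR n m r s D k : m = 2 ^ n -> 1 <= n -> hconstr r (rcons s D) k -> diso D (Sst m (m - 1)) ->
  forall j, 1 <= j <= n -> exists s' D', [/\ hconstr r (rcons s' D') (k + (j - 1) * (2 * m).+1),
     ext (rcons s D) (rcons s' D') & diso D' (Sst m (m + 1 - 2 ^ j))].
Proof.
move=> em n1 hc iso; elim => [|j IH]; first by case/andP.
move=> /andP [j1 jn].
case: (posnP j) => [->|jp].
  exists s, D; split => //; first by rewrite subnn mul0n addn0.
  by have -> : m + 1 - 2 ^ 1 = m - 1 by lia.
have [s' [D' [hc' ex' iso']]] := IH (introT andP (conj jp (ltnW jn))).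
have m2 : 2 <= m by rewrite em -(subnK n1) expnD expn1 leq_pmull // expn_gt0.
have Pj : 2 <= 2 ^ j by rewrite -(subnK jp) expnD expn1 leq_pmull // expn_gt0.
have Pj1 : 2 ^ j.+1 <= m by rewrite em leq_exp2l.
have ePj : 2 ^ j.+1 = 2 * 2 ^ j by rewrite expnS.
have e0 : 0 < m + 1 - 2 ^ j < m by lia.
have [s'' [D'' [hc'' ex'' iso'']]] := Rgen m2 e0 hc' (In_rcons_last _ _) iso'.
exists s'', D''; split.
- by have -> : k + (j.+1 - 1) * (2 * m).+1 = k + (j - 1) * (2 * m).+1 + (2 * m).+1 by rewrite subn1 /=; nia.
- exact: ext_trans ex' ex''.
- have -> : m + 1 - 2 ^ j.+1 = (2 * (m + 1 - 2 ^ j) + m) %% (2 * m).+1; last by [].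
  have -> : 2 * (m + 1 - 2 ^ j) + m = (m + 1 - 2 ^ j.+1) + (2 * m).+1 by lia.
  rewrite modnDr modn_small //; lia.
Qed.

Lemma level_step n s D k : 1 <= n -> hconstr 3 (rcons s D) k -> diso D (DC (2 ^ n).+1) ->
  exists s' D', hconstr 3 (rcons s' D') (k + 1 + (n + 2) * (2 ^ (n + 1)).+1) /\ diso D' (DC (2 ^ (n + 1)).+1).
Proof.
move=> n1 hc iso.
set m := 2 ^ n.
have m2 : 2 <= m by rewrite /m -(subnK n1) expnD expn1 leq_pmull // expn_gt0.
have eL : 2 ^ (n + 1) = 2 * m by rewrite expnD expn1 mulnC.
rewrite eL.
have [s1 [J [hc1 ex1 isoJ]]] := J_step m2 hc (In_rcons_last _ _) iso.
have [s2 [D2 [hc2 ex2 iso2]]] := R1 m2 hc1 (In_rcons_last _ _) isoJ.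
have [s3 [D3 [hc3 ex3 iso3]]] := iterR (erefl m) n1 hc2 iso2 (introT andP (conj n1 (leqnn n))).
have e1 : m + 1 - 2 ^ n = 1 by rewrite /m; lia.
rewrite e1 in iso3.
have inJ : List.In J (rcons s3 D3) by apply: ex3; apply: ex2; apply: In_rcons_last.
have [s4 [D4 [hc4 ex4 iso4]]] := Rpair m2 hc3 (In_rcons_last _ _) inJ iso3 isoJ.
have [s5 [D5 [hc5 ex5 iso5]]] := Rfin m2 hc4 (In_rcons_last _ _) iso4.
exists s5, D5; split; last exact: diso_trans iso5 (W0_DC m).
suff -> : k + 1 + (n + 2) * (2 * m).+1 = k.+1 + (2 * m).+1 + (n - 1) * (2 * m).+1 + (2 * m).+1 + (2 * m).+1 by [].
move: (2 * m).+1 => L'; nia.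
Qed.

Definition F n := n * (2 ^ (n + 2) + n + 5) %/ 2 - 7.

Lemma F_step n : 1 <= n -> F n.+1 = F n + 1 + (n + 2) * (2 ^ (n + 1)).+1.
Proof.
move=> n1; rewrite /F.
have e1 : 2 ^ (n.+1 + 2) = 8 * 2 ^ n by rewrite !expnD expnS; lia.
have e2 : 2 ^ (n + 2) = 4 * 2 ^ n by rewrite expnD; lia.
have e3 : 2 ^ (n + 1) = 2 * 2 ^ n by rewrite expnD; lia.
rewrite e1 e2 e3.
have P1 : 2 <= 2 ^ n by rewrite -(subnK n1) expnD expn1 leq_pmull // expn_gt0.
move: (2 ^ n) P1 => P P1.
have ev : n * (n + 5) = 2 * ((n * (n + 5)) %/ 2).
  have : 2 %| n * (n + 5) by rewrite dvdn2 oddM oddD /=; case: (odd n).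
  by move/divnK; rewrite mulnC.
move: ((n * (n + 5)) %/ 2) ev => Q ev.
have h1 : n * (4 * P + n + 5) = 2 * (2 * (n * P) + Q) by nia.
have h2 : n.+1 * (8 * P + n.+1 + 5) = 2 * (4 * (n * P) + 4 * P + Q + n + 3) by nia.
rewrite h1 h2 !mulKn //.
have Q3 : 3 <= Q by nia.
have h3 : (n + 2) * (2 * P).+1 = 2 * (n * P) + 4 * P + n + 2 by nia.
rewrite h3.
have nP : 2 <= n * P by nia.
move: (n * P) nP => NP nP.
lia.
Qed.

Lemma DC3_DK : diso (DC 3) (DK 3).
Proof.
exists id; split; first by exists id.
by move=> [[|[|[|x]]] hx] [[|[|[|y]]] hy].
Qed.

Lemma build n : 1 <= n -> exists s D, hconstr 3 (rcons s D) (F n) /\ diso D (DC (2 ^ n).+1).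
Proof.
elim: n => [//|n IH] _.
case: (posnP n) => [->|np].
  exists [::], (DC 3); split; last by rewrite expn1; exists id; split; [exists id|].
  have -> : F 1 = 0 by [].
  by apply: hc_base; [exact: hc_nil | exact: DC3_DK].
have [s [D [hc iso]]] := IH np.
have [s' [D' [hc' iso']]] := level_step np hc iso.
exists s', D'; split.
  by rewrite F_step.
by rewrite addn1 in iso'.
Qed.
Set Implicit Arguments. Unset Strict Implicit. Unset Printing Implicit Defensive.

Lemma shrink q j r s D k : 2 <= q -> 1 <= j -> hconstr r (rcons s D) k -> diso D (DC (2 * q + 2 * j).+1) ->
  exists s' D', hconstr r (rcons s' D') (k + 2) /\ diso D' (DC (2 * q).+1).
Proof.
move=> q2 j1 hc [f [[g fK gK] fa]].
pose h (x : 'I_(dsize D)) : 'I_(2 * q).+1 := inord (fsh j (f x)).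
have hE x : nat_of_ord (h x) = fsh j (f x).
  rewrite inordK // ltnS -ltnS; apply: sh_lt => //; exact: ltn_ord.
have o0 : nat_of_ord (inord 0 : 'I_(2 * q).+1) = 0 by rewrite inordK.
have o1 : nat_of_ord (inord 1 : 'I_(2 * q).+1) = 1 by rewrite inordK //; lia.
pose T : {set 'I_(2 * q).+1} := [set inord 0; inord 1].
have cT : #|T| = 2.
  rewrite cards2; suff -> : (inord 0 : 'I_(2 * q).+1) != inord 1 by [].
  by rewrite neqO o0 o1.
suff [s' [D' [hc' _ iso']]] : exists s' D', [/\ hconstr r (rcons s' D') (k + #|T|),
    ext (rcons s D) (rcons s' D') & diso D' (DC (2 * q).+1)].
  by exists s', D'; rewrite cT in hc'; split.
apply: (@fold_lemma r s k D (DC (2 * q).+1) h T hc).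
- case=> a al; have al' : a < (2 * q).+1 := al; rewrite /=; kill_mod; lia.
- move=> x y; rewrite -fa => xy; change (is_true (dcn (2 * q).+1 (h x) (h y))).
  rewrite !hE; apply: sh_hom => //; exact: ltn_ord.
- move=> a b ab; change (is_true (dcn (2 * q).+1 a b)) in ab.
  have /and5P [l1 l2 e1 e2 d] := sh_cov q2 j1 (ltn_ord a) (ltn_ord b) ab.
  exists (g (inord (pw q j a b))), (g (inord (pw q j b a))); split.
  + by apply: val_inj; rewrite /= hE gK inordK // (eqP e1).
  + by apply: val_inj; rewrite /= hE gK inordK // (eqP e2).
  + rewrite -fa !gK; change (is_true (dcn (2 * q + 2 * j).+1 (inord (pw q j a b) : 'I_(2 * q + 2 * j).+1)
                                (inord (pw q j b a) : 'I_(2 * q + 2 * j).+1))).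
    by rewrite !inordK.
- move=> z; have [zl ez] := sh_surj q2 j1 (ltn_ord z).
  exists (g (inord (if z < 2 then nat_of_ord z else z + 2 * j))).
  by apply: val_inj; rewrite /= hE gK inordK.
- move=> x1 x2 e; rewrite !inE negb_or => /andP [n0 n1].
  have ge2 : 2 <= fsh j (f x1).
    move: n0 n1; rewrite !neqO o0 o1 hE => ? ?; lia.
  have : f x1 = f x2.
    apply: val_inj; apply: (sh_fib q2 j1 (ltn_ord _) (ltn_ord _)) => //.
    by rewrite -!hE e.
  by move/(congr1 g); rewrite !fK.
Qed.
Unset Implicit Arguments.

Theorem theorem2 (n : nat) : 2 <= n ->
  hajos_number_le 3 (DC (2 ^ n + 1)) (n * (2 ^ (n + 2) + n + 5) %/ 2 - 7) /\
  (forall m : nat, 2 ^ (n - 1) + 1 < 2 * m + 1 < 2 ^ n + 1 ->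
     hajos_number_le 3 (DC (2 * m + 1)) (n * (2 ^ (n + 2) + n + 5) %/ 2 - 5)).
Proof.
move=> n2.
have n1 : 1 <= n by lia.
have [s [D [hc iso]]] := build n1.
split.
  by exists s, (F n), D; split => //; rewrite addn1.
move=> mm /andP [lo hi].
have eP : 2 ^ n = 2 * 2 ^ (n - 1) by rewrite -expnS; congr (_ ^ _); lia.
have P2 : 2 <= 2 ^ (n - 1) by rewrite -[n - 1](@subnK 1) ?expnD ?expn1 ?leq_pmull ?expn_gt0 //; lia.
rewrite eP in hi iso.
have q2 : 2 <= mm by lia.
have j1 : 1 <= 2 ^ (n - 1) - mm by lia.
have eL : 2 * 2 ^ (n - 1) = 2 * mm + 2 * (2 ^ (n - 1) - mm) by lia.
rewrite eL in iso.
have [s' [D' [hc' iso']]] := shrink q2 j1 hc iso.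
exists s', (F n + 2), D'; split => //; first by rewrite addn1.
have Y : 14 <= n * (2 ^ (n + 2) + n + 5).
  have : 1 <= 2 ^ (n + 2) by rewrite expn_gt0.
  move: (2 ^ (n + 2)) => X ?; nia.
rewrite /F; move: (n * (2 ^ (n + 2) + n + 5)) Y => Z ?; lia.
Qed.
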